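(* Let $\rho\in\{1/2,1\}$, let $s>0$ and $\eta>0$ be real numbers, let $q\in\mathbb{C}$, and let $\epsilon<1$ be real. Define the real cubic polynomial $$f(\gamma) = -\gamma^3\eta s^2 - \gamma^2\big[(1-\epsilon+\rho)s^2 + 2\eta s\big] + \gamma\big[2(\epsilon-1)s - s\rho + \rho|q|^2 - \eta\big] + (\epsilon-1).$$ If $f$ has positive roots, then it has exactly two of them (counted with multiplicity).
   Context: The polynomial $f$ satisfies $f(\gamma)=\gamma(1+\gamma s)^2\ell'(\gamma)$, where $\ell(\gamma) = -\rho\log(1+\gamma s) + \rho|q|^2/(\gamma^{-1}+s) + (\epsilon-1)\log\gamma - \eta\gamma$ for $\gamma>0$. Here $\rho=1/2$ corresponds to a real and $\rho=1$ to a complex signal model, $\epsilon$ is a gamma shape parameter and $\eta>0$ a gamma rate parameter. *)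

(* Defs.v *)
From mathcomp Require Import all_boot all_order all_algebra.
From mathcomp Require Import complex.
Set Implicit Arguments. Unset Strict Implicit. Unset Printing Implicit Defensive.
Import Order.TTheory GRing.Theory Num.Theory.
Local Open Scope ring_scope.

Definition cnorm2 (R : rcfType) (q : R[i]) : R :=
  (complex.Re q) ^+ 2 + (complex.Im q) ^+ 2.

Definition fpoly (R : rcfType) (rho s eta eps : R) (q : R[i]) : {poly R} :=
  (- (eta * s ^+ 2)) *: 'X^3
  - ((1 - eps + rho) * s ^+ 2 + 2 * eta * s) *: 'X^2
  + (2 * (eps - 1) * s - s * rho + rho * cnorm2 q - eta) *: 'X
  + (eps - 1)%:P.

Definition num_pos_roots (R : rcfType) (p : {poly R}) (n : nat) : Prop :=
  exists s : seq R,
    [/\ uniq s, (forall x, (x \in s) = (0 < x) && root p x)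
      & (\sum_(x <- s) mup x p)%N = n].

(* Main.v *)
Require Import Defs.
From mathcomp Require Import all_boot all_order all_algebra.
From mathcomp Require Import complex.
From mathcomp Require Import ring lra.
Import Order.TTheory GRing.Theory Num.Theory.
Local Open Scope ring_scope.

Lemma hf (R : rcfType) (rho s eta eps : R) (q : R[i]) x :
  (fpoly rho s eta eps q).[x] = - (eta * s ^+ 2) * x^+3 - ((1 - eps + rho) * s ^+ 2 + 2 * eta * s) * x^+2
  + (2 * (eps - 1) * s - s * rho + rho * cnorm2 q - eta) * x + (eps - 1).
Proof. by rewrite /fpoly !hornerE. Qed.

Lemma cf3 (R : rcfType) (rho s eta eps : R) (q : R[i]) :
  (fpoly rho s eta eps q)`_3 = - (eta * s ^+ 2).
Proof. rewrite /fpoly !coefE /=. by rewrite !mulr0 !mulr1; lra. Qed.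

Theorem lemma1 (R : rcfType) (rho s eta eps : R) (q : R[i]) :
  (rho = 1 / 2 \/ rho = 1) -> 0 < s -> 0 < eta -> eps < 1 ->
  (exists g : R, 0 < g /\ root (fpoly rho s eta eps q) g) ->
  num_pos_roots (fpoly rho s eta eps q) 2.
Proof.
move=> hrho hs heta heps [g0 [hg0 rg0]].
have rhop : 0 < rho by case: hrho => ->; lra.
set p := fpoly rho s eta eps q.
set K := eta * s ^+ 2.
set A := (1 - eps + rho) * s ^+ 2 + 2 * eta * s.
set B := 2 * (eps - 1) * s - s * rho + rho * cnorm2 q - eta.
have hK : 0 < K by rewrite /K mulr_gt0 // exprn_gt0.
have hA : 0 < A.
  rewrite /A addr_gt0 // ?mulr_gt0 // ?exprn_gt0 //; lra.
have hp x : p.[x] = - K * x^+3 - A * x^+2 + B * x + (eps - 1) by exact: hf.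
have [h hh] := factor_theorem p g0 rg0.
set M := g0 + 1 + (B * B + 1) / K.
have hM1 : g0 + 1 <= M.
  rewrite /M lerDl; apply: divr_ge0; last exact: ltW.
  have := sqr_ge0 B; rewrite expr2; lra.
have hKM : B <= K * M.
  have -> : K * M = K * (g0 + 1) + (B * B + 1).
    rewrite /M mulrDr mulrCA divff ?mulr1 //; lra.
  have := sqr_ge0 (B - 1); rewrite expr2 => H0.
  have : 0 <= K * (g0 + 1) by rewrite mulr_ge0 ?ltW //; lra.
  nra.
have hpM : p.[M] < 0.
  rewrite hp.
  have hM0 : 0 < M by lra.
  have : K * M ^+ 3 >= B * M.
    have : K * M ^+3 = (K * M) * (M * M) by rewrite !exprS expr0; ring.
    move=> ->.
    have hKM0 : 0 < K * M by rewrite mulr_gt0.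
    have h1 : K * M <= K * M * M by rewrite ler_peMr ?ltW //; lra.
    have h2 : B <= K * M * M by lra.
    have : B * M <= (K * M * M) * M by apply: ler_wpM2r; [exact: ltW|].
    move=> h3; rewrite mulrA; lra.
  have : 0 < A * M ^+ 2 by rewrite mulr_gt0 // exprn_gt0.
  lra.
have hhM : h.[M] < 0.
  move: hpM; rewrite hh hornerM !hornerE => H; nra.
have hh0 : 0 < h.[0].
  have := hp 0; rewrite hh hornerM !hornerE => H.
  have H2 : h.[0] * g0 = 1 - eps.
    move: H; rewrite /= !mulr0 mulrN; lra.
  nra.
have h0M : 0 <= M by lra.
have [a1 /andP[a1ge a1le] ra1] := @poly_ivt R (- h) 0 M h0M
  (ltac:(rewrite !hornerN; apply/andP; split; lra)).
have ha1 : root h a1 by move: ra1; rewrite rootN.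
have a1p : 0 < a1.
  rewrite lt_neqAle a1ge andbT; apply/eqP => E; move: ha1; rewrite -E.
  by move/eqP => E2; move: hh0; rewrite E2 ltxx.
have [k hk] := factor_theorem h a1 ha1.
have pN0 : p != 0 by apply/eqP => E; move: hpM; rewrite E horner0 ltxx.
have kN0 : k != 0 by apply/eqP => E; move: pN0; rewrite hh hk E !mul0r eqxx.
have sp4 : size p = 4%N.
  apply/eqP; rewrite eqn_leq; apply/andP; split.
    apply/leq_sizeP => j hj; rewrite /p /fpoly !coefE.
    have [-> -> -> ->] : [/\ (j == 3)%N = false, (j == 2)%N = false, (j == 1)%N = false & (j == 0)%N = false].
      by split; apply/negbTE; rewrite neq_ltn; apply/orP; right; apply: leq_trans hj.
    by rewrite !mulr0 ?oppr0 ?subr0 ?addr0.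
  rewrite ltnNge; apply/negP => H.
  have := @cf3 R rho s eta eps q; rewrite -/p nth_default // => /eqP.
  by rewrite eq_sym oppr_eq0 (negbTE (lt0r_neq0 hK)).
have sk : size k = 2%N.
  move: sp4; rewrite hh hk !size_Mmonic ?monicXsubC ?size_XsubC //.
    by rewrite addn2 addn2 /= => -[].
  by rewrite mulf_neq0 ?polyXsubC_eq0.
have [r rr] := poly2_root sk.
have [k2 hk2] := factor_theorem k r rr.
have k2N0 : k2 != 0 by apply/eqP => E; move: kN0; rewrite hk2 E mul0r eqxx.
have sk2 : size k2 = 1%N.
  move: sk; rewrite hk2 size_Mmonic ?monicXsubC ?size_XsubC //.
  by rewrite addn2 /= => -[].
set l := k2`_0.
have Ek2 : k2 = l%:P by apply: size1_polyC; rewrite sk2.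
have lN0 : l != 0 by apply/eqP => E; move: k2N0; rewrite Ek2 E eqxx.
have hp' : p = l%:P * ('X - r%:P) * ('X - a1%:P) * ('X - g0%:P)
  by rewrite hh hk hk2 Ek2.
have hl : l = - K.
  have : lead_coef p = l
    by rewrite hp' !lead_coefM lead_coefC !lead_coefXsubC !mulr1.
  by rewrite lead_coefE sp4 /= cf3.
have hpx x : p.[x] = l * (x - r) * (x - a1) * (x - g0) by rewrite hp' !hornerE.
have rneg : r < 0.
  have H : l * (0 - r) * (0 - a1) * (0 - g0) = eps - 1.
    by rewrite -hpx hp /= !mulr0; lra.
  have Hag : 0 < a1 * g0 by rewrite mulr_gt0.
  have H2 : K * r * (a1 * g0) = eps - 1.
    by rewrite -H hl; ring.
  rewrite ltNge; apply/negP => hr.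
  have : 0 <= K * r * (a1 * g0) by rewrite mulr_ge0 // mulr_ge0 // ltW.
  lra.
have hroot x : root p x = [|| x == r, x == a1 | x == g0].
  by rewrite hp' !rootM rootC (negbTE lN0) !root_XsubC orbA.
have mX x y : mup x ('X - y%:P) = (y == x)%N.
  by have := mup_XsubCX 1 x y; rewrite expr1 => ->; case: (y == x).
have hmup x : mup x p = ((r == x) + (a1 == x) + (g0 == x))%N.
  rewrite hp' !mupM ?mulf_neq0 ?polyC_eq0 ?polyXsubC_eq0 // !mX.
  by rewrite mupNroot ?rootC.
have rg : (r == g0) = false by apply/negbTE; rewrite lt_eqF //; lra.
have ra : (r == a1) = false by apply/negbTE; rewrite lt_eqF //; lra.
case: (eqVneq a1 g0) => [Eag|Nag].
  exists [:: g0]; split => //.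
    move=> x; rewrite inE hroot; case: (eqVneq x g0) => [->|Nx].
      by rewrite hg0 !orbT.
    rewrite -Eag in Nx *; rewrite (negbTE Nx) /= orbF.
    by case: (eqVneq x r) => [->|]; [rewrite ltNge (ltW rneg) | rewrite andbF].
  by rewrite big_seq1 hmup rg Eag eqxx.
exists [:: a1; g0]; split => //.
    by rewrite /= inE Nag.
  move=> x; rewrite !inE hroot; case: (eqVneq x g0) => [->|Nx].
    by rewrite hg0 !orbT.
  case: (eqVneq x a1) => [->|Na]; first by rewrite a1p orbT.
  rewrite /= !orbF.
  by case: (eqVneq x r) => [->|]; [rewrite ltNge (ltW rneg) | rewrite andbF].
by rewrite big_cons big_seq1 !hmup ra rg eqxx (negbTE Nag) eq_sym (negbTE Nag) eqxx.
Qed.
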